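(* Let $(G,\ell)$ be a group with an invariant $\Lambda$-valued pseudo-norm. Then $(G,\ell)$ is metrically LEF if and only if $G^{\square,\mathbb Q}$ has the finite model property for existential sentences with respect to $T_{IPMG}$. If $\ell$ is a norm, then $(G,\ell)$ is metrically LEF if and only if $G^{\square,\mathbb Q}$ has the finite model property for existential sentences with respect to $T_{IMG}$.
   Context: $\Lambda$ is a closed convex subset of $[0,\infty)$ containing $0$. A pseudo-norm on $G$ is $\ell:G\to\Lambda$ with $\ell(1)=0$, $\ell(g)=\ell(g^{-1})$, $\ell(gh)\le\ell(g)+\ell(h)$; a norm if $\ell(g)=0\Rightarrow g=1$; invariant if $\ell(h^{-1}gh)=\ell(g)$. $L^{\square,\mathbb Q}$ is the language of groups $(\cdot,{}^{-1},1)$ plus unary predicates $R^{\square\varepsilon}$, $\square\in\{<,>,=\}$, $\varepsilon\in\Lambda\cap\mathbb Q$; $G^{\square,\mathbb Q}$ is the group $G$ with $R^{\square\varepsilon}(g)$ interpreted as $\ell(g)\,\square\,\varepsilon$. $T_{IPMG}$ is the $L^{\square,\mathbb Q}$-theory whose models are the groups $M$ with predicates such that: for every $a\in M$ and $\varepsilon\in\Lambda\cap\mathbb Q$ exactly one of $R^{<\varepsilon}(a),R^{=\varepsilon}(a),R^{>\varepsilon}(a)$ holds (write $f(a,\varepsilon)$ for that symbol); for $q\le q'$ in $\Lambda\cap\mathbb Q$, $f(g,q)\in\{<,=\}\Rightarrow f(g,q')\in\{<,=\}$ and $f(g,q')\in\{>,=\}\Rightarrow f(g,q)\in\{>,=\}$;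 $f(1,0)$ is $=$ and $f(g,0)\in\{=,>\}$ for all $g$; $f(g,q)=f(g^{-1},q)$; if $f(g,q),f(g',q')\in\{<,=\}$ and $q+q'\in\Lambda$ then $f(gg',q+q')\in\{<,=\}$; and $f(hgh^{-1},q)=f(g,q)$. $T_{IMG}$ is $T_{IPMG}$ together with: $f(g,0)\in\{<,=\}\Rightarrow g=1$. A structure $M$ has the finite model property for existential sentences with respect to a theory $T$ if every existential $L^{\square,\mathbb Q}$-sentence true in $M$ is true in some finite model of $T$. $(G,\ell)$ is metrically LEF if for every finite $D\subseteq G$ and finite $Q\subseteq\Lambda\cap\mathbb Q$ with $0\in Q$ there are a finite group $C$ with invariant $\Lambda$-valued pseudo-norm $\ell_C$ and a map $\varphi:G\to C$ injective on $D$ with $\varphi(hg)=\varphi(h)\varphi(g)$ whenever $h,g,hg\in D$ and $\ell(g)\,\square\,q\iff\ell_C(\varphi(g))\,\square\,q$ for all $g\in D,q\in Q,\square$. *)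

(* Defs.v *)
From HB Require Import structures.
From mathcomp Require Import all_boot all_order all_algebra.
From mathcomp Require Import all_classical all_reals all_analysis.
From Stdlib Require Import List.
Set Implicit Arguments. Unset Strict Implicit. Unset Printing Implicit Defensive.
Import Order.TTheory GRing.Theory Num.Theory.
Import numFieldNormedType.Exports.
Local Open Scope classical_set_scope.
Local Open Scope ring_scope.

Record AbsGroup := {
  gcar :> Type;
  gmul : gcar -> gcar -> gcar;
  ginv : gcar -> gcar;
  gone : gcar;
  gmulA : forall x y z, gmul x (gmul y z) = gmul (gmul x y) z;
  gmul1x : forall x, gmul gone x = x;
  gmulx1 : forall x, gmul x gone = x;
  gmulVx : forall x, gmul (ginv x) x = gone;
  gmulxV : forall x, gmul x (ginv x) = gone }.

Definition finite_type (T : Type) : Prop := exists l : list T, forall x, List.In x l.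

Definition LambdaSet (R : realType) (L : set R) : Prop :=
  [/\ closed L,
      (forall x y t, L x -> L y -> 0 <= t -> t <= 1 -> L (t * x + (1 - t) * y)),
      (forall x, L x -> 0 <= x) &
      L 0].

Definition pseudo_norm (R : realType) (L : set R) (G : AbsGroup) (l : G -> R) : Prop :=
  [/\ (forall g, L (l g)),
      l (gone G) = 0,
      (forall g, l g = l (ginv g)) &
      (forall g h, l (gmul g h) <= l g + l h)].

Definition is_norm (R : realType) (L : set R) (G : AbsGroup) (l : G -> R) : Prop :=
  pseudo_norm L l /\ (forall g, l g = 0 -> g = gone G).

Definition invariant (R : realType) (G : AbsGroup) (l : G -> R) : Prop :=
  forall g h, l (gmul (ginv h) (gmul g h)) = l g.

Definition inv_pseudo_norm (R : realType) (L : set R) (G : AbsGroup) (l : G -> R) :=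
  pseudo_norm L l /\ invariant l.

Inductive sq := sqLt | sqEq | sqGt.

Definition cmp (R : realType) (s : sq) (x y : R) : Prop :=
  match s with sqLt => x < y | sqEq => x = y | sqGt => x > y end.

Inductive term :=
  | tvar of nat
  | tone
  | tmul of term & term
  | tinv of term.

(* quantifier-free formulas; fRel s e t is the atomic formula R^{s e}(t) *)
Inductive qformula :=
  | fEq of term & term
  | fRel of sq & rat & term
  | fNot of qformula
  | fAnd of qformula & qformula
  | fOr of qformula & qformula.

(* a formula belongs to L^{square,Q}: all predicate indices lie in Lambda /\ Q *)
Fixpoint wf_formula (R : realType) (L : set R) (f : qformula) : Prop :=
  match f with
  | fEq _ _ => True
  | fRel _ e _ => L (ratr e)
  | fNot f1 => wf_formula L f1
  | fAnd f1 f2 => wf_formula L f1 /\ wf_formula L f2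
  | fOr f1 f2 => wf_formula L f1 /\ wf_formula L f2
  end.

(* an L^{square,Q}-structure whose group reduct is a group:
   M together with interpretations rel s e of the predicates R^{s e} *)
Definition Rel (M : AbsGroup) := sq -> rat -> M -> Prop.

Fixpoint eval_term (M : AbsGroup) (v : nat -> M) (t : term) : M :=
  match t with
  | tvar n => v n
  | tone => gone M
  | tmul t1 t2 => gmul (eval_term v t1) (eval_term v t2)
  | tinv t1 => ginv (eval_term v t1)
  end.

Fixpoint sat (M : AbsGroup) (rel : Rel M) (v : nat -> M) (f : qformula) : Prop :=
  match f with
  | fEq t1 t2 => eval_term v t1 = eval_term v t2
  | fRel s e t => rel s e (eval_term v t)
  | fNot f1 => ~ sat rel v f1
  | fAnd f1 f2 => sat rel v f1 /\ sat rel v f2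
  | fOr f1 f2 => sat rel v f1 \/ sat rel v f2
  end.

(* The existential sentence "exists x_0 ... x_k, f" (k bounding the variables of
   the quantifier-free f) holds in (M, rel). *)
Definition sat_exists (M : AbsGroup) (rel : Rel M) (f : qformula) : Prop :=
  exists v : nat -> M, sat rel v f.

Definition Gstr (R : realType) (G : AbsGroup) (l : G -> R) : Rel G :=
  fun s e g => cmp s (l g) (ratr e).

Definition LQ (R : realType) (L : set R) (q : rat) : Prop := L (ratr q).

Definition leq_sym (M : AbsGroup) (rel : Rel M) q g := rel sqLt q g \/ rel sqEq q g.
Definition geq_sym (M : AbsGroup) (rel : Rel M) q g := rel sqGt q g \/ rel sqEq q g.

Definition model_IPMG (R : realType) (L : set R) (M : AbsGroup) (rel : Rel M) : Prop :=
  [/\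
      (forall a e, LQ L e ->
         [/\ rel sqLt e a \/ rel sqEq e a \/ rel sqGt e a,
             ~ (rel sqLt e a /\ rel sqEq e a),
             ~ (rel sqLt e a /\ rel sqGt e a) &
             ~ (rel sqEq e a /\ rel sqGt e a)]),
      (forall g q q', LQ L q -> LQ L q' -> (q <= q')%R ->
         (leq_sym rel q g -> leq_sym rel q' g) /\
         (geq_sym rel q' g -> geq_sym rel q g)),
      (rel sqEq 0%R (gone M) /\ (forall g, geq_sym rel 0%R g)),
      ((forall g q s, LQ L q -> (rel s q g <-> rel s q (ginv g))) /\
       (forall g h q s, LQ L q ->
         (rel s q (gmul h (gmul g (ginv h))) <-> rel s q g))) &
      (forall g g' q q', LQ L q -> LQ L q' -> LQ L (q + q') ->
         leq_sym rel q g -> leq_sym rel q' g' -> leq_sym rel (q + q') (gmul g g'))].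

Arguments model_IPMG {R} L M rel.

Definition model_IMG (R : realType) (L : set R) (M : AbsGroup) (rel : Rel M) : Prop :=
  model_IPMG L M rel /\ (forall g, leq_sym rel 0%R g -> g = gone M).
Arguments model_IMG {R} L M rel.

(* finite model property for existential sentences w.r.t. a theory given by
   its class of models *)
Definition fmp_exists (R : realType) (L : set R)
    (model : forall M : AbsGroup, Rel M -> Prop) (G : AbsGroup) (relG : Rel G) : Prop :=
  forall f : qformula, wf_formula L f -> sat_exists relG f ->
    exists (M : AbsGroup) (rel : Rel M),
      [/\ finite_type M, model M rel & sat_exists rel f].

Definition metrically_LEF (R : realType) (L : set R) (G : AbsGroup) (l : G -> R) : Prop :=
  forall (D : list G) (Qs : list rat),
    (forall q, List.In q Qs -> LQ L q) -> List.In 0%R Qs ->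
    exists (C : AbsGroup) (lC : C -> R) (phi : G -> C),
      [/\ finite_type C,
          inv_pseudo_norm L lC,
          (forall g h, List.In g D -> List.In h D -> phi g = phi h -> g = h),
          (forall h g, List.In h D -> List.In g D -> List.In (gmul h g) D ->
             phi (gmul h g) = gmul (phi h) (phi g)) &
          (forall g q s, List.In g D -> List.In q Qs ->
             (cmp s (l g) (ratr q) <-> cmp s (lC (phi g)) (ratr q)))].

(* Main.v *)
Require Import Defs.
From mathcomp Require Import all_boot all_order all_algebra.
From mathcomp Require Import all_classical all_reals all_analysis.
From mathcomp Require Import ring lra.
From Stdlib Require Import List ClassicalEpsilon ProofIrrelevance.
Set Implicit Arguments. Unset Strict Implicit. Unset Printing Implicit Defensive.
Import Order.TTheory GRing.Theory Num.Theory.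
Local Open Scope classical_set_scope.
Local Open Scope ring_scope.

Section GroupLemmas.
Variable G : AbsGroup.
Local Notation "x * y" := (@gmul G x y).
Local Notation "x ^-1" := (@ginv G x).
Local Notation "1" := (@gone G).

Lemma gmulKg (a b : G) : a^-1 * (a * b) = b.
Proof. by rewrite gmulA gmulVx gmul1x. Qed.
Lemma gmulKVg (a b : G) : a * (a^-1 * b) = b.
Proof. by rewrite gmulA gmulxV gmul1x. Qed.
Lemma gmulgK (a b : G) : (b * a) * a^-1 = b.
Proof. by rewrite -gmulA gmulxV gmulx1. Qed.
Lemma gmulgKV (a b : G) : (b * a^-1) * a = b.
Proof. by rewrite -gmulA gmulVx gmulx1. Qed.
Lemma ginv_uniq (a b : G) : a * b = 1 -> b = a^-1.
Proof. by move=> h; rewrite -(gmulKg a b) h gmulx1. Qed.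
Lemma ginvK (a : G) : (a^-1)^-1 = a.
Proof. by symmetry; apply: ginv_uniq; rewrite gmulVx. Qed.
Lemma ginv1 : 1^-1 = 1 :> G.
Proof. by symmetry; apply: ginv_uniq; rewrite gmul1x. Qed.
Lemma ginvM (a b : G) : (a * b)^-1 = b^-1 * a^-1.
Proof.
symmetry; apply: ginv_uniq.
by rewrite -gmulA (gmulA b) gmulxV gmul1x gmulxV.
Qed.
Lemma gmul_id (a : G) : a * a = a -> a = 1.
Proof. by move=> h; rewrite -(gmulKg a a) h gmulVx. Qed.
Lemma gmulI (a b c : G) : a * b = a * c -> b = c.
Proof. by move=> h; rewrite -(gmulKg a b) h gmulKg. Qed.
End GroupLemmas.

Lemma L_sub (R : realType) (L : set R) (HL : LambdaSet L) (x y : R) :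
  L x -> 0 <= y -> y <= x -> L y.
Proof.
case: HL => _ Hconv _ H0 Lx y0 yx.
have [ex|x0] := eqVneq x 0.
  subst x; by have -> : y = 0 by apply/eqP; rewrite eq_le y0 yx.
have xp : 0 < x by rewrite lt_def x0 (le_trans y0 yx).
have := Hconv x 0 (y / x) Lx H0.
rewrite mulr0 addr0 divfK //; apply.
  by rewrite divr_ge0 // ltW.
by rewrite ler_pdivrMr // mul1r.
Qed.

Lemma L_ge0 (R : realType) (L : set R) (HL : LambdaSet L) x : L x -> 0 <= x.
Proof. by case: HL => _ _ H _; apply: H. Qed.

Lemma L0 (R : realType) (L : set R) (HL : LambdaSet L) : L 0.
Proof. by case: HL. Qed.

Definition typ (R : realType) (x y : R) : sq :=
  if x < y then sqLt else if x == y then sqEq else sqGt.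

Lemma cmp_typ (R : realType) (x y : R) : cmp (typ x y) x y.
Proof.
rewrite /typ; case: ltgtP => //= h; by rewrite ?h.
Qed.

Lemma cmp_uniq (R : realType) s t (x z y : R) : cmp s x y -> cmp t x y -> s = t.
Proof.
case: s; case: t => //= h1 h2;
  try (by subst; rewrite ltxx in h1); try (by subst; rewrite ltxx in h2);
  by have := lt_trans h1 h2; rewrite ltxx.
Qed.

Lemma cmp_transfer (R : realType) s (x z y : R) :
  cmp s x y -> cmp s z y -> forall t, cmp t x y <-> cmp t z y.
Proof.
move=> hx hz t; split=> h.
  by have <- := cmp_uniq z hx h.
by have <- := cmp_uniq z hz h.
Qed.

Lemma leq_GstrE (R : realType) (C : AbsGroup) (lC : C -> R) q g :
  leq_sym (Gstr lC) q g <-> lC g <= ratr q.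
Proof.
rewrite /leq_sym /Gstr /=; split.
  by case=> [h|->]; [exact: ltW|].
by rewrite le_eqVlt => /orP[/eqP->|h]; [right|left].
Qed.

Lemma geq_GstrE (R : realType) (C : AbsGroup) (lC : C -> R) q g :
  geq_sym (Gstr lC) q g <-> ratr q <= lC g.
Proof.
rewrite /geq_sym /Gstr /=; split.
  by case=> [h|->]; [exact: ltW|].
by rewrite le_eqVlt => /orP[/eqP->|h]; [right|left].
Qed.

Lemma Gstr_model (R : realType) (L : set R) (HL : LambdaSet L)
  (C : AbsGroup) (lC : C -> R) : inv_pseudo_norm L lC -> model_IPMG L C (Gstr lC).
Proof.
move=> [[HLv H1 Hinv Htri] Hconj].
have ge0 g : 0 <= lC g by exact: (L_ge0 HL (HLv g)).
split.
- move=> a e _; rewrite /Gstr /=; split.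
  + by case: ltgtP => h; [left|right;right|right;left].
  + by case=> h1 h2; rewrite h2 ltxx in h1.
  + by case=> h1 h2; have := lt_trans h1 h2; rewrite ltxx.
  + by case=> h1 h2; rewrite h1 ltxx in h2.
- move=> g q q' _ _ hqq'; split.
    rewrite !leq_GstrE => h; apply: le_trans h _; by rewrite ler_rat.
  rewrite !geq_GstrE => h; apply: le_trans _ h; by rewrite ler_rat.
- split; first by rewrite /Gstr /= H1 rmorph0.
  by move=> g; rewrite geq_GstrE rmorph0.
- split.
    by move=> g q s _; rewrite /Gstr -Hinv.
  move=> g h q s _; rewrite /Gstr.
  have := Hconj g (ginv h); rewrite ginvK => ->; done.
- move=> g g' q q' _ _ _; rewrite !leq_GstrE rmorphD => h1 h2.
  apply: le_trans (Htri g g') _; exact: lerD.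
Qed.

Lemma Gstr_model_IMG (R : realType) (L : set R) (HL : LambdaSet L)
  (C : AbsGroup) (lC : C -> R) : inv_pseudo_norm L lC ->
  (forall g, lC g = 0 -> g = gone C) -> model_IMG L C (Gstr lC).
Proof.
move=> H Hn; split; first exact: Gstr_model.
move=> g; rewrite leq_GstrE rmorph0 => h; apply: Hn.
case: H => [[HLv _ _ _] _].
by apply/eqP; rewrite eq_le h (L_ge0 HL (HLv g)).
Qed.

Fixpoint tvals (G : AbsGroup) (v : nat -> G) (t : term) : list G :=
  eval_term v t :: match t with
                   | tmul a b => tvals v a ++ tvals v b
                   | tinv a => tvals v a
                   | _ => nil end.

Lemma tvals_head (G : AbsGroup) (v : nat -> G) t : In (eval_term v t) (tvals v t).
Proof. by case: t => *; left. Qed.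

Fixpoint fterms (f : qformula) : list term :=
  match f with
  | fEq t1 t2 => t1 :: t2 :: nil
  | fRel _ _ t => t :: nil
  | fNot f1 => fterms f1
  | fAnd f1 f2 => fterms f1 ++ fterms f2
  | fOr f1 f2 => fterms f1 ++ fterms f2
  end.

Fixpoint fidx (f : qformula) : list rat :=
  match f with
  | fEq _ _ => nil
  | fRel _ e _ => e :: nil
  | fNot f1 => fidx f1
  | fAnd f1 f2 => fidx f1 ++ fidx f2
  | fOr f1 f2 => fidx f1 ++ fidx f2
  end.

Lemma fidx_wf (R : realType) (L : set R) f : wf_formula L f -> forall e, In e (fidx f) -> LQ L e.
Proof.
elim: f => [t1 t2|s e t|f1 IH|f1 IH1 f2 IH2|f1 IH1 f2 IH2] /=.
- by [].
- by move=> h e' [<-|[]].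
- exact: IH.
- by move=> [h1 h2] e he; case: (in_app_or _ _ _ he) => he'; [exact: IH1 h1 e he'|exact: IH2 h2 e he'].
- by move=> [h1 h2] e he; case: (in_app_or _ _ _ he) => he'; [exact: IH1 h1 e he'|exact: IH2 h2 e he'].
Qed.

Section Transfer.
Variables (R : realType) (G C : AbsGroup) (l : G -> R) (lC : C -> R) (phi : G -> C).
Variables (D : list G) (Qs : list rat) (v : nat -> G).
Hypothesis D1 : In (gone G) D.
Hypothesis Hinj : forall g h, In g D -> In h D -> phi g = phi h -> g = h.
Hypothesis Hhom : forall h g, In h D -> In g D -> In (gmul h g) D ->
             phi (gmul h g) = gmul (phi h) (phi g).
Hypothesis Hcmp : forall g q s, In g D -> In q Qs ->
             (cmp s (l g) (ratr q) <-> cmp s (lC (phi g)) (ratr q)).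

Lemma phi1 : phi (gone G) = gone C.
Proof.
apply: gmul_id; rewrite -Hhom ?gmul1x //.
Qed.

Lemma phi_eval t : (forall x, In x (tvals v t) -> In x D) ->
  phi (eval_term v t) = eval_term (fun n => phi (v n)) t.
Proof.
elim: t => [n||a IHa b IHb|a IHa] H //=.
- exact: phi1.
- rewrite Hhom; first by rewrite IHa ?IHb // => x hx; apply: H; right; apply: in_or_app; auto.
  + by apply: H; right; apply: in_or_app; left; exact: tvals_head.
  + by apply: H; right; apply: in_or_app; right; exact: tvals_head.
  + by apply: H; left.
- have ea : In (eval_term v a) D by apply: H; right; exact: tvals_head.
  have eia : In (ginv (eval_term v a)) D by apply: H; left.
  rewrite -IHa; last by move=> x hx; apply: H; right.
  apply: ginv_uniq; rewrite -Hhom ?gmulxV ?phi1 //.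
Qed.

Lemma sat_transfer f :
  (forall t, In t (fterms f) -> forall x, In x (tvals v t) -> In x D) ->
  (forall e, In e (fidx f) -> In e Qs) ->
  (sat (Gstr l) v f <-> sat (Gstr lC) (fun n => phi (v n)) f).
Proof.
elim: f => /= [t1 t2|s e t|f1 IH|f1 IH1 f2 IH2|f1 IH1 f2 IH2] HT HQ.
- have h1 := HT t1 (or_introl erefl).
  have h2 := HT t2 (or_intror (or_introl erefl)).
  rewrite -!phi_eval //; split; first by move->.
  apply: Hinj.
  + by apply: h1; exact: tvals_head.
  + by apply: h2; exact: tvals_head.
- have h1 := HT t (or_introl erefl).
  rewrite /Gstr -phi_eval //; apply: Hcmp; last by apply: HQ; left.
  by apply: h1; exact: tvals_head.
- by rewrite IH.
- rewrite IH1 ?IH2 //.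
  + by move=> t ht; apply: HT; apply: in_or_app; right.
  + by move=> e he; apply: HQ; apply: in_or_app; right.
  + by move=> t ht; apply: HT; apply: in_or_app; left.
  + by move=> e he; apply: HQ; apply: in_or_app; left.
- rewrite IH1 ?IH2 //.
  + by move=> t ht; apply: HT; apply: in_or_app; right.
  + by move=> e he; apply: HQ; apply: in_or_app; right.
  + by move=> t ht; apply: HT; apply: in_or_app; left.
  + by move=> e he; apply: HQ; apply: in_or_app; left.
Qed.
End Transfer.

Lemma lef_fmp_gen (R : realType) (L : set R) (HL : LambdaSet L)
  (G : AbsGroup) (l : G -> R)
  (model : forall M : AbsGroup, Rel M -> Prop)
  (Pn : forall C : AbsGroup, (C -> R) -> Prop)
  (Hmod : forall (C : AbsGroup) (lC : C -> R), inv_pseudo_norm L lC -> Pn C lC ->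
     model C (Gstr lC))
  (Hlef : forall (D : list G) (Qs : list rat),
    (forall q, In q Qs -> LQ L q) -> In 0%R Qs ->
    exists (C : AbsGroup) (lC : C -> R) (phi : G -> C),
      [/\ finite_type C,
          inv_pseudo_norm L lC,
          (forall g h, In g D -> In h D -> phi g = phi h -> g = h),
          (forall h g, In h D -> In g D -> In (gmul h g) D ->
             phi (gmul h g) = gmul (phi h) (phi g)) &
          (forall g q s, In g D -> In q Qs ->
             (cmp s (l g) (ratr q) <-> cmp s (lC (phi g)) (ratr q)))] /\ Pn C lC) :
  fmp_exists L model (Gstr l).
Proof.
move=> f wf [v Hv].
pose D := gone G :: flat_map (tvals v) (fterms f).
pose Qs := 0%R :: fidx f.
have [||C [lC [phi [[Cfin Cn Cinj Chom Ccmp] CP]]]] := Hlef D Qs.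
- move=> q [<-|hq]; first by rewrite /LQ rmorph0; exact: L0 HL.
  exact: fidx_wf wf q hq.
- by left.
exists C, (Gstr lC); split=> //; first exact: Hmod.
exists (fun n => phi (v n)).
have D1 : In (gone G) D by left.
have := @sat_transfer R G C l lC phi D Qs v D1 Cinj Chom Ccmp f.
case.
- by move=> t ht x hx; right; apply/in_flat_map; exists t.
- by move=> e he; right.
- by move=> H _; apply: H.
Qed.

Section Quot.
Variables (R : realType) (L : set R) (HL : LambdaSet L) (C : AbsGroup) (lC : C -> R).
Hypothesis Hn : inv_pseudo_norm L lC.
Local Notation "x * y" := (@gmul C x y).
Local Notation "x ^-1" := (@ginv C x).
Local Notation "1" := (@gone C).

Let HLv : forall g, L (lC g). Proof. by case: Hn => [[]]. Qed.
Let H1 : lC 1 = 0. Proof. by case: Hn => [[]]. Qed.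
Let Hinv : forall g, lC g = lC (g^-1). Proof. by case: Hn => [[]]. Qed.
Let Htri : forall g h, lC (g * h) <= lC g + lC h. Proof. by case: Hn => [[]]. Qed.
Let Hconj : forall g h, lC (h^-1 * (g * h)) = lC g. Proof. by case: Hn. Qed.
Let ge0 g : 0 <= lC g. Proof. apply: (L_ge0 HL); apply: HLv. Qed.

Definition rel_q (a b : C) := lC (a^-1 * b) = 0.

Lemma zero_le (x : R) : x <= 0 -> 0 <= x -> x = 0.
Proof. by move=> h1 h2; apply/eqP; rewrite eq_le h1 h2. Qed.

Lemma rel_refl a : rel_q a a.
Proof. by rewrite /rel_q gmulVx H1. Qed.
Lemma rel_sym a b : rel_q a b -> rel_q b a.
Proof. by rewrite /rel_q Hinv ginvM ginvK. Qed.
Lemma rel_trans a b c : rel_q a b -> rel_q b c -> rel_q a c.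
Proof.
rewrite /rel_q => h1 h2; apply: zero_le (ge0 _).
have -> : a^-1 * c = (a^-1 * b) * (b^-1 * c) by rewrite -gmulA gmulKVg.
by apply: le_trans (Htri _ _) _; rewrite h1 h2 addr0.
Qed.
Lemma rel_mul a a' b b' : rel_q a a' -> rel_q b b' -> rel_q (a * b) (a' * b').
Proof.
rewrite /rel_q => h1 h2; apply: zero_le (ge0 _).
have -> : (a * b)^-1 * (a' * b') = (b^-1 * ((a^-1 * a') * b)) * (b^-1 * b').
  by rewrite ginvM !gmulA (gmulgK b).
by apply: le_trans (Htri _ _) _; rewrite Hconj h1 h2 addr0.
Qed.
Lemma rel_inv a a' : rel_q a a' -> rel_q (a^-1) (a'^-1).
Proof.
rewrite /rel_q => h; rewrite ginvK.
have -> : a * a'^-1 = (a^-1)^-1 * ((a'^-1 * a) * a^-1).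
  by rewrite ginvK !gmulA (gmulgK a).
by rewrite Hconj Hinv ginvM ginvK.
Qed.
Lemma rel_l a b : rel_q a b -> lC a = lC b.
Proof.
rewrite /rel_q => h; apply/eqP; rewrite eq_le; apply/andP; split.
  have -> : a = b * (b^-1 * a) by rewrite gmulKVg.
  apply: le_trans (Htri _ _) _.
  by have := rel_sym h; rewrite /rel_q => ->; rewrite addr0.
have -> : b = a * (a^-1 * b) by rewrite gmulKVg.
by apply: le_trans (Htri _ _) _; rewrite h addr0.
Qed.

Definition rep (a : C) : C := epsilon (inhabits 1) (fun d => rel_q d a).
Lemma rep_rel a : rel_q (rep a) a.
Proof. apply: (epsilon_spec (inhabits 1) (fun d => rel_q d a)); exists a; apply: rel_refl. Qed.
Lemma rep_eq a b : rel_q a b -> rep a = rep b.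
Proof.
move=> h; rewrite /rep; congr epsilon.
apply: functional_extensionality_dep => d; apply: propositional_extensionality.
split=> h'; first exact: rel_trans h' h.
exact: rel_trans h' (rel_sym h).
Qed.
Lemma rep_rep a : rep (rep a) = rep a.
Proof. exact: rep_eq (rep_rel a). Qed.
Lemma rep_eqE a b : rep a = rep b -> rel_q a b.
Proof.
move=> h; apply: rel_trans (rel_sym (rep_rel a)) _.
by rewrite h; apply: rep_rel.
Qed.

Definition Qt := {a : C | rep a = a}.
Definition mkQ (a : C) : Qt := exist _ (rep a) (rep_rep a).
Lemma Qval_inj (x y : Qt) : proj1_sig x = proj1_sig y -> x = y.
Proof.
case: x => x hx; case: y => y hy /= e; subst y.
by rewrite (proof_irrelevance _ hx hy).
Qed.
Lemma mkQ_val (x : Qt) : mkQ (proj1_sig x) = x.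
Proof. by apply: Qval_inj; case: x. Qed.
Lemma mkQ_eq a b : rel_q a b -> mkQ a = mkQ b.
Proof. by move=> h; apply: Qval_inj; rewrite /= (rep_eq h). Qed.

Definition qmul (x y : Qt) := mkQ (proj1_sig x * proj1_sig y).
Definition qinv (x : Qt) := mkQ ((proj1_sig x)^-1).
Definition qone := mkQ 1.

Lemma mkQ_mul a b : qmul (mkQ a) (mkQ b) = mkQ (a * b).
Proof. by apply: mkQ_eq; apply: rel_mul; apply: rep_rel. Qed.
Lemma mkQ_inv a : qinv (mkQ a) = mkQ (a^-1).
Proof. by apply: mkQ_eq; apply: rel_inv; apply: rep_rel. Qed.

Lemma Qelim (P : Qt -> Prop) : (forall a, P (mkQ a)) -> forall x, P x.
Proof. by move=> h x; rewrite -(mkQ_val x). Qed.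

Lemma qmulA x y z : qmul x (qmul y z) = qmul (qmul x y) z.
Proof.
elim/Qelim: x; elim/Qelim: y; elim/Qelim: z => a b c.
by rewrite !mkQ_mul gmulA.
Qed.
Lemma qmul1x x : qmul qone x = x.
Proof. by elim/Qelim: x => a; rewrite /qone mkQ_mul gmul1x. Qed.
Lemma qmulx1 x : qmul x qone = x.
Proof. by elim/Qelim: x => a; rewrite /qone mkQ_mul gmulx1. Qed.
Lemma qmulVx x : qmul (qinv x) x = qone.
Proof. by elim/Qelim: x => a; rewrite mkQ_inv mkQ_mul gmulVx. Qed.
Lemma qmulxV x : qmul x (qinv x) = qone.
Proof. by elim/Qelim: x => a; rewrite mkQ_inv mkQ_mul gmulxV. Qed.

Definition QG : AbsGroup := Build_AbsGroup qmulA qmul1x qmulx1 qmulVx qmulxV.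

Definition lQ (x : QG) : R := lC (proj1_sig x).
Lemma lQ_mkQ a : lQ (mkQ a) = lC a.
Proof. exact: rel_l (rep_rel a). Qed.

Lemma QG_norm : inv_pseudo_norm L lQ /\ (forall q : QG, lQ q = 0 -> q = gone QG).
Proof.
split; [split; [split|]|].
- by move=> x; apply: HLv.
- by rewrite /= /qone lQ_mkQ.
- by elim/Qelim => a; rewrite /= mkQ_inv !lQ_mkQ.
- by elim/Qelim => a; elim/Qelim => b; rewrite /= mkQ_mul !lQ_mkQ.
- elim/Qelim => a; elim/Qelim => b; rewrite /= mkQ_inv !mkQ_mul !lQ_mkQ.
  exact: Hconj.
- elim/Qelim => a; rewrite lQ_mkQ => h /=; apply: mkQ_eq.
  by rewrite /rel_q Hinv ginvM ginvK ginv1 gmul1x.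
Qed.

Lemma QG_fin : finite_type C -> finite_type QG.
Proof.
case=> s hs; exists (map mkQ s) => x; rewrite -(mkQ_val x).
by apply: in_map.
Qed.
End Quot.

Lemma quotient_norm (R : realType) (L : set R) (HL : LambdaSet L) (C : AbsGroup) (lC : C -> R) :
  finite_type C -> inv_pseudo_norm L lC ->
  exists (Q : AbsGroup) (lQ : Q -> R) (pi : C -> Q),
    [/\ finite_type Q, inv_pseudo_norm L lQ /\ (forall q, lQ q = 0 -> q = gone Q),
        (forall a b, pi (gmul a b) = gmul (pi a) (pi b)),
        (forall a, lQ (pi a) = lC a) &
        (forall a b, pi a = pi b -> lC (gmul (ginv a) b) = 0)].
Proof.
move=> fin Hn.
exists (@QG R L HL C lC Hn), (@lQ R L HL C lC Hn), (@mkQ R L HL C lC Hn); split.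
- exact: QG_fin.
- exact: QG_norm.
- by move=> a b /=; rewrite mkQ_mul.
- exact: lQ_mkQ.
- move=> a b h; apply: (@rep_eqE R L HL C lC Hn a b); exact: (congr1 (@proj1_sig _ _) h).
Qed.

Definition gq (N k : nat) : rat := k%:R / N%:R.

Lemma list_bound (R : realType) (A B : Type) (f : A -> B -> R) (la : list A) (lb : list B) :
  exists M, 0 <= M /\ forall a b, In a la -> In b lb -> f a b <= M.
Proof.
elim: la => [|a la [M [M0 HM]]]; first by exists 0; split.
have [Ma [Ma0 HMa]] : exists Ma, 0 <= Ma /\ forall b, In b lb -> f a b <= Ma.
  elim: lb {HM} => [|b lb [Mb [Mb0 HMb]]]; first by exists 0.
  exists (`|f a b| + Mb); split; first by rewrite addr_ge0.
  move=> b' [<-|hb]; first by rewrite -[X in X <= _]addr0 lerD // ler_norm.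
  by rewrite -[X in X <= _]add0r lerD // HMb.
exists (Ma + M); split; first by rewrite addr_ge0.
move=> a' b [<-|ha] hb.
  by rewrite -[X in X <= _]addr0 lerD // HMa.
by rewrite -[X in X <= _]add0r lerD // HM.
Qed.

Lemma rat_nat_frac (q : rat) : 0 <= q -> exists n d : nat, (0 < d)%N /\ q = n%:R / d%:R.
Proof.
move=> q0.
have hn : numq q = (`|numq q|%N)%:Z by rewrite gez0_abs // numq_ge0.
have hd : denq q = (`|denq q|%N)%:Z by rewrite gez0_abs // ltW // denq_gt0.
exists `|numq q|%N, `|denq q|%N; split.
  by rewrite -ltz_nat -hd denq_gt0.
by rewrite -{1}[q]divq_num_den hn hd.
Qed.

Lemma common_den (Qs : list rat) : (forall q, In q Qs -> 0 <= q) ->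
  exists N, (0 < N)%N /\ forall q, In q Qs -> exists k : nat, q = gq N k.
Proof.
elim: Qs => [|q Qs IH] H; first by exists 1%N.
have [N [N0 HN]] := IH (fun q' h => H q' (or_intror h)).
have [n [d [d0 ->]]] := rat_nat_frac (H q (or_introl erefl)).
have Nne : (N%:R : rat) != 0 by rewrite pnatr_eq0 -lt0n.
have dne : (d%:R : rat) != 0 by rewrite pnatr_eq0 -lt0n.
exists (N * d)%N; split; first by rewrite muln_gt0 N0 d0.
move=> q' [<-|hq].
  exists (n * N)%N; rewrite /gq !natrM; field.
  by rewrite Nne dne.
have [k ->] := HN q' hq.
exists (k * d)%N; rewrite /gq !natrM; field.
by rewrite ?Nne ?dne.
Qed.

Lemma gqD N k n : gq N (k + n) = gq N k + gq N n.
Proof. by rewrite /gq natrD mulrDl. Qed.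

Lemma gq_ge0 N k : 0 <= gq N k.
Proof. by rewrite /gq divr_ge0 ?ler0n. Qed.

Lemma ler_gq N k n : (0 < N)%N -> (gq N k <= gq N n) = (k <= n)%N.
Proof.
move=> N0; rewrite /gq ler_pM2r ?ler_nat // invr_gt0 ltr0n //.
Qed.

Lemma ltr_gq N k n : (0 < N)%N -> (gq N k < gq N n) = (k < n)%N.
Proof.
move=> N0; rewrite /gq ltr_pM2r ?ltr_nat // invr_gt0 ltr0n //.
Qed.

Lemma gq_mul N m k : (0 < N)%N -> gq N k = gq (N * m.+1) (k * m.+1).
Proof.
move=> N0; rewrite /gq !natrM; field.
have h1 : (1 + m%:R : rat) != 0 by rewrite addrC natr1 pnatr_eq0.
by rewrite h1 pnatr_eq0 -lt0n N0.
Qed.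

Lemma gq_pred N k : (0 < N)%N -> (0 < k)%N -> gq N k = gq N k.-1 + 1 / N%:R.
Proof.
move=> N0 k0; rewrite /gq -mulrDl natr1 prednK //.

Qed.

Lemma T_exists (R : realType) (L : set R) (HL : LambdaSet L) N (Qs : list rat) :
  (0 < N)%N ->
  (forall q, In q Qs -> LQ L q /\ exists k, q = gq N k) ->
  exists T, (forall q, In q Qs -> exists k, (k <= T)%N /\ q = gq N k) /\
            (forall k, (k <= T)%N -> LQ L (gq N k)).
Proof.
move=> N0; elim: Qs => [|q Qs IH] H.
  exists 0%N; split=> // k; rewrite leqn0 => /eqP ->.
  by rewrite /LQ /gq mul0r rmorph0; exact: L0 HL.
have [T [HT1 HT2]] := IH (fun q' h => H q' (or_intror h)).
have [Lq [kq ekq]] := H q (or_introl erefl).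
exists (maxn T kq); split.
  move=> q' [<-|hq].
    by exists kq; rewrite leq_maxr.
  have [k [hk ->]] := HT1 q' hq.
  by exists k; rewrite (leq_trans hk) // leq_maxl.
move=> k; rewrite leq_max => /orP[hk|hk]; first exact: HT2.
apply: (L_sub HL Lq); first by rewrite ler0q gq_ge0.
by rewrite ekq ler_rat ler_gq.
Qed.

Lemma grid_exists (R : realType) (L : set R) (HL : LambdaSet L) (G : Type) (l : G -> R)
  (Hl0 : forall g, 0 <= l g) (D : list G) (Qs : list rat)
  (HQ : forall q, In q Qs -> LQ L q) :
  exists N T, [/\ (0 < N)%N,
   (forall q, In q Qs -> exists k, (k <= T)%N /\ q = gq N k),
   (forall k, (k <= T)%N -> LQ L (gq N k)) &
   (forall g q, In g D -> In q Qs -> l g < ratr q ->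
      exists k, [/\ (k <= T)%N, l g <= ratr (gq N k) & (ratr (gq N k) : R) < ratr q])].
Proof.
have Q0 : forall q, In q Qs -> 0 <= q.
  by move=> q hq; rewrite -(ler0q R) (L_ge0 HL (HQ q hq)).
have [N0 [N00 HN0]] := common_den Q0.
have [B [B0 HB]] := list_bound (fun g q => 1 / (ratr q - l g) : R) D Qs.
pose m := Num.Def.archi_bound B.
have Bm : B < m%:R by apply: archi_boundP.
pose N := (N0 * m.+1)%N.
have N0N : (0 < N)%N by rewrite muln_gt0 N00.
have mN : (m%:R : R) <= N%:R.
  rewrite ler_nat /N; apply: (leq_trans (leqnSn m)).
  by rewrite -{1}(mul1n m.+1) leq_mul2r N00 orbT.
have HQ' : forall q, In q Qs -> LQ L q /\ exists k, q = gq N k.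
  move=> q h; split; first exact: HQ.
  have [k ->] := HN0 q h; exists (k * m.+1)%N; exact: gq_mul.
have [T [HT1 HT2]] := T_exists HL N0N HQ'.
exists N, T; split=> // g q hg hq hlt.
have [kq [hkq ekq]] := HT1 q hq.
have kq0 : (0 < kq)%N.
  rewrite lt0n; apply/negP => /eqP e; move: hlt; rewrite ekq e /gq mul0r rmorph0.
  by rewrite ltNge Hl0.
exists kq.-1; split.
- by rewrite (leq_trans (leq_pred kq)).
- have x0 : 0 < ratr q - l g by rewrite subr_gt0.
  have h1 : 1 / (ratr q - l g) < N%:R.
    by apply: le_lt_trans (HB g q hg hq) _; apply: lt_le_trans Bm mN.
  rewrite ltr_pdivrMr // in h1.
  have h2 : 1 / (N%:R : R) <= ratr q - l g.
    rewrite ler_pdivrMr ?ltr0n // mulrC; exact: ltW.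
  have := congr1 (@ratr R) (gq_pred N0N kq0).
  rewrite -ekq rmorphD /gq !fmorph_div !rmorph1 !rmorph_nat => e.
  lra.
- by rewrite ekq ltr_rat ltr_gq // prednK // ltnSn.
Qed.

Section ModelFacts.
Variables (R : realType) (L : set R) (M : AbsGroup) (rel : Rel M).
Hypothesis Hmod : model_IPMG L M rel.

Lemma mm_excl q a : LQ L q -> rel sqGt q a -> leq_sym rel q a -> False.
Proof.
case: Hmod => H _ _ _ _ hq hg; have [_ _ h1 h2] := H a q hq.
by case=> h; [apply: h1|apply: h2].
Qed.
Lemma mm_mono q q' a : LQ L q -> LQ L q' -> q <= q' -> leq_sym rel q a -> leq_sym rel q' a.
Proof. by case: Hmod => _ H _ _ _ hq hq' hle; case: (H a q q' hq hq' hle). Qed.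
Lemma mm_one : leq_sym rel 0 (gone M).
Proof. by case: Hmod => _ _ [H _] _ _; right. Qed.
Lemma mm_tri g g' q q' : LQ L q -> LQ L q' -> LQ L (q + q') ->
  leq_sym rel q g -> leq_sym rel q' g' -> leq_sym rel (q + q') (gmul g g').
Proof. by case: Hmod => _ _ _ _ H; apply: H. Qed.
Lemma mm_inv q a : LQ L q -> leq_sym rel q (ginv a) <-> leq_sym rel q a.
Proof.
case: Hmod => _ _ _ [H _] _ hq; rewrite /leq_sym.
by rewrite -!(H a q _ hq).
Qed.
Lemma mm_conj q a h : LQ L q ->
  leq_sym rel q (gmul (ginv h) (gmul a h)) <-> leq_sym rel q a.
Proof.
case: Hmod => _ _ _ [_ H] _ hq; rewrite /leq_sym.
have := H a (ginv h) q; rewrite ginvK => H'.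
by rewrite !H'.
Qed.
End ModelFacts.

Section PathNorm.
Variables (R : realType) (L : set R) (HL : LambdaSet L) (M : AbsGroup) (rel : Rel M).
Hypothesis Hmod : model_IPMG L M rel.
Variables (N T : nat) (K : R).
Hypothesis N0 : (0 < N)%N.
Hypothesis HT : forall k, (k <= T)%N -> LQ L (gq N k).
Hypothesis LK : L K.

Local Notation gr k := (ratr (gq N k) : R).

Lemma gr_ge0 k : 0 <= gr k.
Proof. by rewrite ler0q gq_ge0. Qed.
Lemma K_ge0 : 0 <= K.
Proof. apply: (L_ge0 HL); exact: LK. Qed.

Definition wstep (a : M) (k : nat) (acc : R) : R :=
  if pselect (leq_sym rel (gq N k) a) then (if gr k <= acc then gr k else acc) else acc.
Definition wfold (a : M) (s : list nat) := foldr (wstep a) K s.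
Definition w (a : M) := wfold a (iota 0 T.+1).

Lemma wfold_cases a s : wfold a s = K \/
  exists k, [/\ k \in s, wfold a s = gr k & leq_sym rel (gq N k) a].
Proof.
elim: s => [|k s IH] /=; first by left.
rewrite /wstep; case: pselect => hk; last first.
  case: IH => [->|[k' [h1 h2 h3]]]; first by left.
  by right; exists k'; rewrite seq.in_cons h1 orbT.
case: ifP => _; first by right; exists k; rewrite seq.in_cons eqxx.
case: IH => [->|[k' [h1 h2 h3]]]; first by left.
by right; exists k'; rewrite seq.in_cons h1 orbT.
Qed.

Lemma wfold_leK a s : wfold a s <= K.
Proof.
elim: s => [|k s IH] /=; first by [].
rewrite /wstep; case: pselect => hp //; case: ifP => // h.
exact: le_trans h IH.
Qed.

Lemma wfold_ge0 a s : 0 <= wfold a s.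
Proof.
elim: s => [|k s IH] /=; first exact: K_ge0.
rewrite /wstep; case: pselect => hp //; case: ifP => // h; exact: gr_ge0.
Qed.

Lemma wfold_le a s k : k \in s -> leq_sym rel (gq N k) a -> wfold a s <= gr k.
Proof.
elim: s => [|k' s IH] //=; rewrite seq.in_cons => /orP[/eqP <-|hk] hl.
  rewrite /wstep; case: pselect => [hp|hn]; last by exfalso; apply: hn.
  case: ifP => //.
  by move/negbT; rewrite -ltNge => /ltW.
have := IH hk hl; rewrite /wstep; case: pselect => hp //; case: ifP => // h1 h2.
exact: le_trans h1 h2.
Qed.

Lemma wfold_ext a b s : (forall k, k \in s -> (leq_sym rel (gq N k) a <-> leq_sym rel (gq N k) b)) ->
  wfold a s = wfold b s.
Proof.
elim: s => [|k s IH] //= H.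
rewrite IH; last by move=> k' hk'; apply: H; rewrite seq.in_cons hk' orbT.
rewrite /wstep; case: pselect => ha; case: pselect => hb //.
- by exfalso; apply: hb; apply/(H k _).1 => //; rewrite seq.in_cons eqxx.
- by exfalso; apply: ha; apply/(H k _).2 => //; rewrite seq.in_cons eqxx.
Qed.

Lemma w_cases a : w a = K \/ exists k, [/\ (k <= T)%N, w a = gr k & leq_sym rel (gq N k) a].
Proof.
case: (wfold_cases a (iota 0 T.+1)) => [h|[k [h1 h2 h3]]]; first by left.
by right; exists k; split=> //; move: h1; rewrite mem_iota add0n ltnS.
Qed.
Lemma w_leK a : w a <= K. Proof. exact: wfold_leK. Qed.
Lemma w_ge0 a : 0 <= w a. Proof. exact: wfold_ge0. Qed.
Lemma w_le a k : (k <= T)%N -> leq_sym rel (gq N k) a -> w a <= gr k.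
Proof. by move=> hk; apply: wfold_le; rewrite mem_iota add0n ltnS. Qed.
Lemma w_ext a b : (forall k, (k <= T)%N -> (leq_sym rel (gq N k) a <-> leq_sym rel (gq N k) b)) ->
  w a = w b.
Proof. by move=> H; apply: wfold_ext => k; rewrite mem_iota add0n ltnS; apply: H. Qed.

Lemma w_inv a : w (ginv a) = w a.
Proof. by apply: w_ext => k hk; apply: (mm_inv Hmod); apply: HT. Qed.
Lemma w_conj a h : w (gmul (ginv h) (gmul a h)) = w a.
Proof. by apply: w_ext => k hk; apply: (mm_conj Hmod); apply: HT. Qed.

Definition prodl (s : list M) : M := foldr (@gmul M) (gone M) s.
Definition sumw (s : list M) : R := foldr (fun a acc => w a + acc) 0 s.

Lemma prodl_cat s1 s2 : prodl (s1 ++ s2) = gmul (prodl s1) (prodl s2).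
Proof. by elim: s1 => [|a s IH] /=; rewrite ?gmul1x // IH gmulA. Qed.
Lemma sumw_cat s1 s2 : sumw (s1 ++ s2) = sumw s1 + sumw s2.
Proof. by elim: s1 => [|a s IH] /=; rewrite ?add0r // IH addrA. Qed.
Lemma sumw_ge0 s : 0 <= sumw s.
Proof. by elim: s => [|a s IH] //=; rewrite addr_ge0 // w_ge0. Qed.

Definition invl (s : list M) : list M := foldr (fun x acc => acc ++ [:: ginv x]) [::] s.
Lemma prodl_invl s : prodl (invl s) = ginv (prodl s).
Proof.
elim: s => [|a s IH] /=; first by rewrite ginv1.
by rewrite prodl_cat IH /= gmulx1 ginvM.
Qed.
Lemma sumw_invl s : sumw (invl s) = sumw s.
Proof.
elim: s => [|a s IH] //=.
by rewrite sumw_cat IH /= w_inv addr0 addrC.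
Qed.

Definition cj (h a : M) : M := gmul (ginv h) (gmul a h).
Lemma prodl_cj h s : prodl (map (cj h) s) = cj h (prodl s).
Proof.
elim: s => [|a s IH] /=; first by rewrite /cj gmul1x gmulVx.
rewrite IH /cj.
by rewrite !gmulA (gmulgK h) -!gmulA.
Qed.
Lemma sumw_cj h s : sumw (map (cj h) s) = sumw s.
Proof. by elim: s => [|a s IH] //=; rewrite IH /cj w_conj. Qed.

Definition Sset (c : M) : set R := [set x | exists s, prodl s = c /\ x = sumw s].
Definition lC (c : M) : R := inf (Sset c).

Lemma Sset_lb c : has_lbound (Sset c).
Proof. by exists 0 => x [s [_ ->]]; apply: sumw_ge0. Qed.

Lemma lC_le c s : prodl s = c -> lC c <= sumw s.
Proof. by move=> h; apply: (ge_inf (Sset_lb c)); exists s. Qed.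

Lemma lC_ge c b : (forall s, prodl s = c -> b <= sumw s) -> b <= lC c.
Proof.
move=> H; apply: lb_le_inf.
  by exists (sumw [:: c]), [:: c]; rewrite /= gmulx1.
by move=> x [s [hs ->]]; apply: H.
Qed.

Lemma lC_ge0 c : 0 <= lC c.
Proof. by apply: lC_ge => s _; apply: sumw_ge0. Qed.

Lemma lC_w c : lC c <= w c.
Proof. by have := lC_le (s := [:: c]); rewrite /= gmulx1 addr0; apply. Qed.

Lemma lC1 : lC (gone M) = 0.
Proof.
apply/eqP; rewrite eq_le lC_ge0 andbT.
by have := lC_le (s := [::]); apply.
Qed.

Lemma lC_tri a b : lC (gmul a b) <= lC a + lC b.
Proof.
have h1 : forall s1, prodl s1 = a -> lC (gmul a b) - sumw s1 <= lC b.
  move=> s1 hs1; apply: lC_ge => s2 hs2.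
  have := lC_le (s := s1 ++ s2); rewrite prodl_cat hs1 hs2 sumw_cat => h.
  have := h _ erefl; lra.
have : lC (gmul a b) - lC b <= lC a.
  by apply: lC_ge => s1 hs1; have := h1 s1 hs1; lra.
lra.
Qed.

Lemma lC_inv_le a : lC (ginv a) <= lC a.
Proof.
apply: lC_ge => s hs.
by rewrite -sumw_invl; apply: lC_le; rewrite prodl_invl hs.
Qed.
Lemma lC_inv a : lC a = lC (ginv a).
Proof.
apply/eqP; rewrite eq_le lC_inv_le andbT.
by have := lC_inv_le (ginv a); rewrite ginvK.
Qed.

Lemma lC_cj_le h a : lC (cj h a) <= lC a.
Proof.
apply: lC_ge => s hs.
by rewrite -(sumw_cj h); apply: lC_le; rewrite prodl_cj hs.
Qed.
Lemma lC_cj h a : lC (cj h a) = lC a.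
Proof.
apply/eqP; rewrite eq_le lC_cj_le /=.
have := lC_cj_le (ginv h) (cj h a).
have -> : cj (ginv h) (cj h a) = a.
  by rewrite /cj ginvK !gmulA gmulxV gmul1x -gmulA gmulxV gmulx1.
done.
Qed.

Lemma lC_inL c : L (lC c).
Proof.
apply: (L_sub HL LK (lC_ge0 c)).
exact: le_trans (lC_w c) (w_leK c).
Qed.

Lemma lC_norm : inv_pseudo_norm L lC.
Proof.
split; first split.
- exact: lC_inL.
- exact: lC1.
- exact: lC_inv.
- exact: lC_tri.
- by move=> g h; apply: lC_cj.
Qed.

Lemma sum_struct s : K <= sumw s \/
  exists n, sumw s = gr n /\ (L (gr n) -> leq_sym rel (gq N n) (prodl s)).
Proof.
elim: s => [|a s IH] /=.
  right; exists 0%N; rewrite /gq mul0r rmorph0; split=> // _.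
  exact: (mm_one Hmod).
case: (w_cases a) => [->|[k [hk -> hka]]].
  by left; rewrite -[X in X <= _]addr0 lerD // sumw_ge0.
case: IH => [IH|[n [-> Hn]]].
  by left; apply: le_trans IH _; rewrite -[X in X <= _]add0r lerD // gr_ge0.
right; exists (k + n)%N; rewrite gqD rmorphD; split=> // Lkn.
have Lk : LQ L (gq N k) := HT hk.
have Ln : L (gr n).
  apply: (L_sub HL Lkn (gr_ge0 n)).
  by rewrite -[X in X <= _]add0r lerD // gr_ge0.
apply: (mm_tri Hmod) => //; first by rewrite /LQ rmorphD.
exact: Hn.
Qed.

Lemma lC_match (c : M) (x : R) (kq : nat) :
  (forall k, (k <= T)%N -> rel (typ x (gr k)) (gq N k) c) ->
  x <= K -> (kq <= T)%N ->
  (x < gr kq -> exists k, [/\ (k <= T)%N, x <= gr k & gr k < gr kq]) ->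
  cmp (typ x (gr kq)) (lC c) (gr kq).
Proof.
move=> Hc HK hkq Happ.
have leqc k : (k <= T)%N -> x <= gr k -> leq_sym rel (gq N k) c.
  move=> hk hx; have := Hc k hk; rewrite /typ; case: ltgtP hx => //= h _ hr.
  - by left.
  - by right.
rewrite /typ; case: ltgtP => /= h.
- have [k [hk h1 h2]] := Happ h.
  apply: le_lt_trans (lC_w c) _; apply: le_lt_trans h2.
  exact: w_le hk (leqc k hk h1).
-
  have Hgt : rel sqGt (gq N kq) c.
    by have := Hc kq hkq; rewrite /typ ltNge (ltW h) /= gt_eqF.
  have hb : Num.min K (gr kq.+1) <= lC c.
    apply: lC_ge => s hs; case: (sum_struct s) => [hK|[n [-> Hn]]].
      by rewrite ge_min hK.
    rewrite ge_min; apply/orP; right.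
    rewrite ler_rat ler_gq //; rewrite ltnNge; apply/negP => hn.
    apply: (mm_excl Hmod (HT hkq) Hgt).
    apply: (mm_mono Hmod (HT (leq_trans hn hkq)) (HT hkq)); first by rewrite ler_gq.
    by rewrite -hs; apply: Hn; apply: HT; exact: leq_trans hn hkq.
  apply: lt_le_trans hb; rewrite lt_min; apply/andP; split.
    exact: lt_le_trans h HK.
  by rewrite ltr_rat ltr_gq.
-
  apply/eqP; rewrite eq_le; apply/andP; split.
    apply: le_trans (lC_w c) _; apply: (w_le hkq).
    by apply: (leqc kq hkq); rewrite -h.
  apply: lC_ge => s hs; case: (sum_struct s) => [hK|[n [-> Hn]]].
    by rewrite -h (le_trans HK hK).
  rewrite ler_rat ler_gq //; rewrite leqNgt; apply/negP => hn.
  have kq0 : (0 < kq)%N by apply: leq_ltn_trans hn.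
  have hkq1 : (kq.-1 <= T)%N by apply: leq_trans (leq_pred kq) hkq.
  have hnk : (n <= kq.-1)%N by rewrite -ltnS prednK.
  have Hgt : rel sqGt (gq N kq.-1) c.
    have := Hc kq.-1 hkq1; rewrite /typ.
    have hlt : gr kq.-1 < x by rewrite h ltr_rat ltr_gq // prednK.
    by rewrite ltNge (ltW hlt) /= gt_eqF.
  apply: (mm_excl Hmod (HT hkq1) Hgt).
  apply: (mm_mono Hmod (HT (leq_trans hnk hkq1)) (HT hkq1)); first by rewrite ler_gq.
  by rewrite -hs; apply: Hn; apply: HT; exact: leq_trans hnk hkq1.
Qed.
End PathNorm.

Definition fTrue := fEq tone tone.
Fixpoint andN (n : nat) (F : nat -> qformula) : qformula :=
  match n with 0%N => fTrue | S n' => fAnd (andN n' F) (F n') end.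

Lemma sat_andN (M : AbsGroup) (rel : Rel M) v n F :
  sat rel v (andN n F) <-> forall i, (i < n)%N -> sat rel v (F i).
Proof.
elim: n => [|n IH] /=; first by split.
rewrite IH; split.
  by move=> [h1 h2] i; rewrite ltnS leq_eqVlt => /orP[/eqP->|/h1].
move=> h; split; last exact: h.
by move=> i hi; apply: h; rewrite ltnS ltnW.
Qed.

Lemma wf_andN (R : realType) (L : set R) n F :
  (forall i, (i < n)%N -> wf_formula L (F i)) -> wf_formula L (andN n F).
Proof.
elim: n => [|n IH] /= H; first by [].
split; last exact: H.
by apply: IH => i hi; apply: H; rewrite ltnS ltnW.
Qed.

Lemma K_exists (R : realType) (L : set R) (G : Type) (l : G -> R) (D : list G) x0 :
  L x0 -> (forall g, L (l g)) ->
  exists K, [/\ L K, x0 <= K & forall g, In g D -> l g <= K].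
Proof.
move=> Lx0 Hl; elim: D => [|g D [K [LK h0 hD]]]; first by exists x0.
case: (lerP (l g) K) => hg.
  by exists K; split=> // g' [<-|h]; [|apply: hD].
exists (l g); split=> //; first exact: le_trans h0 (ltW hg).
by move=> g' [<-|h] //; apply: le_trans (hD g' h) (ltW hg).
Qed.

Lemma fmp_lef (R : realType) (L : set R) (HL : LambdaSet L)
    (G : AbsGroup) (l : G -> R) (Hl : inv_pseudo_norm L l) :
  fmp_exists L (model_IPMG L) (Gstr l) -> metrically_LEF L l.
Proof.
move=> Hfmp D Qs HQ Q0.
have HlL : forall g, L (l g) by case: Hl => [[]].
have Hl0 : forall g, 0 <= l g by move=> g; apply: (L_ge0 HL); apply: HlL.
have [N [T [N0 HQk HT Happ]]] := grid_exists HL Hl0 D HQ.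
have [K [LK KT KD]] := K_exists D (HT T (leqnn T)) HlL.
pose nD := length D.
pose nthD i := List.nth i D (gone G).
pose F1 := andN nD (fun i => andN nD (fun j =>
   if pselect (nthD i = nthD j) then fTrue else fNot (fEq (tvar i) (tvar j)))).
pose F2 := andN nD (fun i => andN nD (fun j => andN nD (fun k =>
   if pselect (nthD k = gmul (nthD i) (nthD j)) then fEq (tvar k) (tmul (tvar i) (tvar j))
   else fTrue))).
pose F3 := andN nD (fun i => andN T.+1 (fun k =>
   fRel (typ (l (nthD i)) (ratr (gq N k))) (gq N k) (tvar i))).
have wf : wf_formula L (fAnd F1 (fAnd F2 F3)).
  split; [|split].
  - apply: wf_andN => i _; apply: wf_andN => j _; by case: pselect.
  - apply: wf_andN => i _; apply: wf_andN => j _; apply: wf_andN => k _; by case: pselect.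
  - apply: wf_andN => i _; apply: wf_andN => k hk /=; apply: HT; by rewrite -ltnS.
have satG : sat_exists (Gstr l) (fAnd F1 (fAnd F2 F3)).
  exists nthD; split; [|split].
  - apply/sat_andN => i _; apply/sat_andN => j _; by case: pselect.
  - apply/sat_andN => i _; apply/sat_andN => j _; apply/sat_andN => k _; by case: pselect.
  - apply/sat_andN => i _; apply/sat_andN => k _ /=; exact: cmp_typ.
have [M [rel [Mfin Mmod [vM [S1 [S2 S3]]]]]] := Hfmp _ wf satG.
move/sat_andN: S1 => S1; move/sat_andN: S2 => S2; move/sat_andN: S3 => S3.
pose idx g := epsilon (inhabits 0%N) (fun i => (i < nD)%N /\ nthD i = g).
have idxP : forall g, In g D -> (idx g < nD)%N /\ nthD (idx g) = g.
  move=> g hg; apply: (epsilon_spec (inhabits 0%N) (fun i => (i < nD)%N /\ nthD i = g)).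
  have [n [hn e]] := In_nth D g (gone G) hg.
  by exists n; split=> //; apply/ssrnat.ltP.
exists M, (lC rel N T K), (fun g => vM (idx g)); split.
- exact: Mfin.
- apply: (lC_norm HL Mmod HT LK).
- move=> g h hg hh e.
  have [ig eg] := idxP g hg; have [ih eh] := idxP h hh.
  have := S1 _ ig; move/sat_andN => /(_ _ ih).
  case: pselect => [e'|_] /=; first by rewrite -eg -eh.
  by [].
- move=> h g hh hg hhg.
  have [ih eh] := idxP h hh; have [ig eg] := idxP g hg; have [ihg ehg] := idxP _ hhg.
  have := S2 _ ih; move/sat_andN => /(_ _ ig); move/sat_andN => /(_ _ ihg).
  by case: pselect => [_ //|]; rewrite ehg eh eg.
- move=> g q s hg hq.
  have [ig eg] := idxP g hg.
  have [kq [hkq eqq]] := HQk q hq; rewrite eqq.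
  apply: cmp_transfer; first exact: cmp_typ.
  apply: (lC_match HL Mmod N0 HT LK) => //.
  + move=> k hk; have := S3 _ ig; move/sat_andN => /(_ k); rewrite ltnS => /(_ hk).
    by rewrite /= eg.
  + exact: KD.
    by move=> h; rewrite -eqq; apply: (Happ g q hg hq); rewrite eqq.
Qed.

Lemma lef_normed (R : realType) (L : set R) (HL : LambdaSet L)
    (G : AbsGroup) (l : G -> R) (Hl : is_norm L l) :
  metrically_LEF L l ->
  forall (D : list G) (Qs : list rat),
    (forall q, In q Qs -> LQ L q) -> In 0%R Qs ->
    exists (C : AbsGroup) (lC : C -> R) (phi : G -> C),
      [/\ finite_type C,
          inv_pseudo_norm L lC,
          (forall g h, In g D -> In h D -> phi g = phi h -> g = h),
          (forall h g, In h D -> In g D -> In (gmul h g) D ->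
             phi (gmul h g) = gmul (phi h) (phi g)) &
          (forall g q s, In g D -> In q Qs ->
             (cmp s (l g) (ratr q) <-> cmp s (lC (phi g)) (ratr q)))] /\
      (forall g, lC g = 0 -> g = gone C).
Proof.
move=> Hlef D Qs HQ Q0.
pose D' := gone G :: D ++ map (@ginv G) D ++
           flat_map (fun g => map (fun h => gmul (ginv g) h) D) D.
have inD g : In g D -> In g D' by move=> h; right; apply: in_or_app; left.
have inDi g : In g D -> In (ginv g) D'.
  by move=> h; right; apply: in_or_app; right; apply: in_or_app; left; apply: in_map.
have inDm g h : In g D -> In h D -> In (gmul (ginv g) h) D'.
  move=> hg hh; right; apply: in_or_app; right; apply: in_or_app; right.
  by apply/in_flat_map; exists g; split=> //; apply: in_map.
have [C [lC [phi [Cfin Cn Cinj Chom Ccmp]]]] := Hlef D' Qs HQ Q0.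
have [Q [lQ [pi [Qfin [Qn Qnorm] pim pil pieq]]]] := quotient_norm HL Cfin Cn.
have D'1 : In (gone G) D' by left.
have phi1 : phi (gone G) = gone C.
  by apply: gmul_id; rewrite -Chom ?gmul1x.
have phiV g : In g D -> phi (ginv g) = ginv (phi g).
  move=> hg; apply: ginv_uniq; rewrite -Chom ?gmulxV //; [exact: inD|exact: inDi].
exists Q, lQ, (fun g => pi (phi g)); split; [split| ].
- exact: Qfin.
- exact: Qn.
- move=> g h hg hh e.
  have := pieq _ _ e; rewrite -phiV // -Chom //; [|exact: inDi|exact: inD|exact: inDm].
  move=> h0.
  have := (Ccmp (gmul (ginv g) h) 0 sqEq (inDm g h hg hh) Q0).2.
  rewrite /= rmorph0 => /(_ h0) /(proj2 Hl) e1.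
  by rewrite -(gmulKVg g h) e1 gmulx1.
- move=> h g hh hg hhg; rewrite Chom ?pim //; exact: inD.
- move=> g q s hg hq; rewrite pil; apply: Ccmp => //; exact: inD.
- exact: Qnorm.
Qed.

Theorem mainTheorem18 (R : realType) (L : set R) (HL : LambdaSet L)
    (G : AbsGroup) (l : G -> R) (Hl : inv_pseudo_norm L l) :
  (metrically_LEF L l <-> fmp_exists L (model_IPMG L) (Gstr l))
  /\ (is_norm L l -> (metrically_LEF L l <-> fmp_exists L (model_IMG L) (Gstr l))).
Proof.
split.
  split; last exact: fmp_lef.
  move=> Hlef.
  apply: (lef_fmp_gen HL (Pn := fun _ _ => True)).
    by move=> C lC hn _; apply: Gstr_model.
  move=> D Qs HQ Q0; have [C [lC [phi H]]] := Hlef D Qs HQ Q0.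
  by exists C, lC, phi.
move=> Hn; split.
  move=> Hlef.
  apply: (lef_fmp_gen HL (Pn := fun C lC => forall g, lC g = 0 -> g = gone C)).
    by move=> C lC hn hz; apply: Gstr_model_IMG.
  exact: lef_normed.
move=> Hfmp; apply: (fmp_lef HL Hl) => f wf hs.
have [M [rel [Mf [Mm _] hs']]] := Hfmp f wf hs.
by exists M, rel.
Qed.
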